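(* Assume the setting in the context. (a) Assume Conditions (MM), (SS), (JS-cts) and (JS-jump). Suppose that for every $f\in\mathcal{D}_{\mathcal{X}}$ there is at most one $u_+\in\mathcal{X}^{\mathcal{U}}$ with $(\widehat Lu_+)|_{\mathcal{U}}=0$, $\widetilde{\operatorname{Tr}}^{\mathcal{U}}_{\mathcal{X}}u_+=f$, and at most one $u_-\in\mathcal{X}^{\mathcal{V}}$ with $(\widehat Lu_-)|_{\mathcal{V}}=0$, $\widetilde{\operatorname{Tr}}^{\mathcal{V}}_{\mathcal{X}}u_-=f$. Then $\widetilde{\operatorname{Tr}}^{\mathcal{U}}_{\mathcal{X}}\widehat{\mathbf{S}}^L_{\mathcal{U}}:\mathcal{N}_{\mathcal{X}}\to\mathcal{D}_{\mathcal{X}}$ is one-to-one. If in addition there is $C_0$ such that every $u_+\in\mathcal{X}^{\mathcal{U}}$ with $(\widehat Lu_+)|_{\mathcal{U}}=0$ and every $u_-\in\mathcal{X}^{\mathcal{V}}$ with $(\widehat Lu_-)|_{\mathcal{V}}=0$ satisfy $\|u_+\|_{\mathcal{X}^{\mathcal{U}}}\le C_0\|\widetilde{\operatorname{Tr}}^{\mathcal{U}}_{\mathcal{X}}u_+\|_{\mathcal{D}_{\mathcal{X}}}$ and $\|u_-\|_{\mathcal{X}^{\mathcal{V}}}\le C_0\|\widetilde{\operatorname{Tr}}^{\mathcal{V}}_{\mathcal{X}}u_-\|_{\mathcal{D}_{\mathcal{X}}}$, then there is $C_1$ with $\|g\|_{\mathcal{N}_{\mathcal{X}}}\le C_1\|\widetilde{\operatorname{Tr}}^{\mathcal{U}}_{\mathcal{X}}\widehat{\mathbf{S}}^L_{\mathcal{U}}g\|_{\mathcal{D}_{\mathcal{X}}}$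 for all $g\in\mathcal{N}_{\mathcal{X}}$. (b) Assume Conditions (TT), (DD), (JD-cts) and (JD-jump). Suppose that for every $g\in\mathcal{N}_{\mathcal{X}}$ there is at most one $u_+\in\mathcal{X}^{\mathcal{U}}$ with $(\widehat Lu_+)|_{\mathcal{U}}=0$, $\widehat{\mathbf{M}}^{\mathcal{U}}_Bu_+=g$, and at most one $u_-\in\mathcal{X}^{\mathcal{V}}$ with $(\widehat Lu_-)|_{\mathcal{V}}=0$, $\widehat{\mathbf{M}}^{\mathcal{V}}_Bu_-=g$. Then $\widehat{\mathbf{M}}^{\mathcal{U}}_B\widehat{\mathbf{D}}^B_{\mathcal{U}}:\mathcal{D}_{\mathcal{X}}\to\mathcal{N}_{\mathcal{X}}$ is one-to-one. If in addition there is $C_0$ such that every $u_+\in\mathcal{X}^{\mathcal{U}}$ with $(\widehat Lu_+)|_{\mathcal{U}}=0$ and every $u_-\in\mathcal{X}^{\mathcal{V}}$ with $(\widehat Lu_-)|_{\mathcal{V}}=0$ satisfy $\|u_+\|_{\mathcal{X}^{\mathcal{U}}}\le C_0\|\widehat{\mathbf{M}}^{\mathcal{U}}_Bu_+\|_{\mathcal{N}_{\mathcal{X}}}$ and $\|u_-\|_{\mathcal{X}^{\mathcal{V}}}\le C_0\|\widehat{\mathbf{M}}^{\mathcal{V}}_Bu_-\|_{\mathcal{N}_{\mathcal{X}}}$, then there is $C_1$ with $\|f\|_{\mathcal{D}_{\mathcal{X}}}\le C_1\|\widehat{\mathbf{M}}^{\mathcal{U}}_B\widehat{\mathbf{D}}^B_{\mathcal{U}}f\|_{\mathcal{N}_{\mathcal{X}}}$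 for all $f\in\mathcal{D}_{\mathcal{X}}$.
   Context: Let $\mathcal{X}^{\mathcal{U}}$, $\mathcal{X}^{\mathcal{V}}$, $\mathcal{D}_{\mathcal{X}}$, $\mathcal{N}_{\mathcal{X}}$ be quasi-Banach spaces. For $\mathcal{O}\in\{\mathcal{U},\mathcal{V}\}$: let $u\mapsto(\widehat Lu)|_{\mathcal{O}}$ be a linear operator on $\mathcal{X}^{\mathcal{O}}$, let $\mathcal{K}^{\mathcal{O}}=\{u\in\mathcal{X}^{\mathcal{O}}:(\widehat Lu)|_{\mathcal{O}}=0\}$, and let $\widetilde{\operatorname{Tr}}^{\mathcal{O}}_{\mathcal{X}}:\mathcal{K}^{\mathcal{O}}\to\mathcal{D}_{\mathcal{X}}$, $\widehat{\mathbf{M}}^{\mathcal{O}}_B:\mathcal{K}^{\mathcal{O}}\to\mathcal{N}_{\mathcal{X}}$, $\widehat{\mathbf{D}}^B_{\mathcal{O}}:\mathcal{D}_{\mathcal{X}}\to\mathcal{X}^{\mathcal{O}}$, $\widehat{\mathbf{S}}^L_{\mathcal{O}}:\mathcal{N}_{\mathcal{X}}\to\mathcal{X}^{\mathcal{O}}$ be linear operators. For $\mathcal{O}\in\{\mathcal U,\mathcal V\}$ consider: (T)$_{\mathcal{O}}$ $\widetilde{\operatorname{Tr}}^{\mathcal{O}}_{\mathcal{X}}$ is bounded $\mathcal{K}^{\mathcal{O}}\to\mathcal{D}_{\mathcal{X}}$; (M)$_{\mathcal{O}}$ $\widehat{\mathbf{M}}^{\mathcal{O}}_B$ is bounded $\mathcal{K}^{\mathcal{O}}\to\mathcal{N}_{\mathcal{X}}$;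 (S)$_{\mathcal{O}}$ $\widehat{\mathbf{S}}^L_{\mathcal{O}}$ is bounded $\mathcal{N}_{\mathcal{X}}\to\mathcal{X}^{\mathcal{O}}$ with range in $\mathcal{K}^{\mathcal{O}}$; (D)$_{\mathcal{O}}$ $\widehat{\mathbf{D}}^B_{\mathcal{O}}$ is bounded $\mathcal{D}_{\mathcal{X}}\to\mathcal{X}^{\mathcal{O}}$ with range in $\mathcal{K}^{\mathcal{O}}$; (G)$_{\mathcal{O}}$ every $u\in\mathcal{K}^{\mathcal{O}}$ satisfies $u=-\widehat{\mathbf{D}}^B_{\mathcal{O}}(\widetilde{\operatorname{Tr}}^{\mathcal{O}}_{\mathcal{X}}u)+\widehat{\mathbf{S}}^L_{\mathcal{O}}(\widehat{\mathbf{M}}^{\mathcal{O}}_Bu)$. Condition (TT) means (T)$_{\mathcal U}$ and (T)$_{\mathcal V}$ both hold; likewise (MM), (SS), (DD), (GG). Further conditions (each including that the potentials involved lie in the respective $\mathcal K^{\mathcal O}$, so the expressions are defined): (JS-cts) $\widetilde{\operatorname{Tr}}^{\mathcal{U}}_{\mathcal{X}}(\widehat{\mathbf{S}}^L_{\mathcal{U}}g)-\widetilde{\operatorname{Tr}}^{\mathcal{V}}_{\mathcal{X}}(\widehat{\mathbf{S}}^L_{\mathcal{V}}g)=0$ for all $g\in\mathcal{N}_{\mathcal{X}}$; (JD-cts) $\widehat{\mathbf{M}}^{\mathcal{U}}_B(\widehat{\mathbf{D}}^B_{\mathcal{U}}f)-\widehat{\mathbf{M}}^{\mathcal{V}}_B(\widehat{\mathbf{D}}^B_{\mathcal{V}}f)=0$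 for all $f\in\mathcal{D}_{\mathcal{X}}$; (JS-jump) $\widehat{\mathbf{M}}^{\mathcal{U}}_B(\widehat{\mathbf{S}}^L_{\mathcal{U}}g)+\widehat{\mathbf{M}}^{\mathcal{V}}_B(\widehat{\mathbf{S}}^L_{\mathcal{V}}g)=g$ for all $g\in\mathcal{N}_{\mathcal{X}}$; (JD-jump) $\widetilde{\operatorname{Tr}}^{\mathcal{U}}_{\mathcal{X}}(\widehat{\mathbf{D}}^B_{\mathcal{U}}f)+\widetilde{\operatorname{Tr}}^{\mathcal{V}}_{\mathcal{X}}(\widehat{\mathbf{D}}^B_{\mathcal{V}}f)=-f$ for all $f\in\mathcal{D}_{\mathcal{X}}$. *)

(* Defs.v *)
From mathcomp Require Import all_boot all_order all_algebra.
Set Implicit Arguments.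
Unset Strict Implicit.
Unset Printing Implicit Defensive.
Import Order.TTheory GRing.Theory Num.Theory.
Local Open Scope ring_scope.

(* Scalars: an arbitrary numeric field R (covers the real and the complex case);
   a quasi-norm on an R-module V is a map q : V -> R with values >= 0. *)

Definition quasi_norm (R : numFieldType) (V : lmodType R) (q : V -> R) : Prop :=
  [/\ forall x, 0 <= q x,
      forall x, q x = 0 -> x = 0,
      forall (a : R) x, q (a *: x) = `|a| * q x
    & exists kappa : R, 1 <= kappa /\ forall x y, q (x + y) <= kappa * (q x + q y)].

Definition qcomplete (R : numFieldType) (V : lmodType R) (q : V -> R) : Prop :=
  forall u : nat -> V,
    (forall eps : R, 0 < eps -> exists N, forall m n, (N <= m)%N -> (N <= n)%N ->
        q (u m - u n) < eps) ->
    exists l : V, forall eps : R, 0 < eps -> exists N, forall n, (N <= n)%N ->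
        q (u n - l) < eps.

Definition quasi_banach (R : numFieldType) (V : lmodType R) (q : V -> R) : Prop :=
  quasi_norm q /\ qcomplete q.

(* T is linear on the subset P (used for operators defined on the kernel K^O) *)
Definition linear_on (R : numFieldType) (V W : lmodType R) (P : V -> Prop)
  (T : V -> W) : Prop :=
  forall (a : R) x y, P x -> P y -> T (a *: x + y) = a *: T x + T y.

Definition bounded_on (R : numFieldType) (V W : lmodType R) (P : V -> Prop)
  (qV : V -> R) (qW : W -> R) (T : V -> W) : Prop :=
  exists C : R, forall x, P x -> qW (T x) <= C * qV x.

(* Main.v *)
Require Import Defs.
From mathcomp Require Import all_boot all_order all_algebra.
Import Order.TTheory GRing.Theory Num.Theory.
Local Open Scope ring_scope.


Lemma bnd_abs (R : numFieldType) (V W : lmodType R) (P : V -> Prop) (qV : V -> R) (qW : W -> R) T :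
  (forall x, 0 <= qV x) -> (forall x, 0 <= qW x) -> bounded_on P qV qW T ->
  exists C, 0 <= C /\ forall x, P x -> qW (T x) <= C * qV x.
Proof.
move=> q0 w0 [C HC]; exists `|C|; split => // x Px.
have h := HC x Px.
have p : 0 <= C * qV x by apply: le_trans h.
by rewrite -(ger0_norm (q0 x)) -normrM ger0_norm.
Qed.

Arguments bnd_abs {R V W P qV qW T}.

Lemma chain (R : numFieldType) (a b c C1 C0 : R) :
  0 <= b -> 0 <= c -> 0 <= C1 -> a <= C1 * b -> b <= C0 * c -> a <= C1 * `|C0| * c.
Proof.
move=> b0 c0 h1 hab hbc; apply: le_trans hab _; rewrite -mulrA; apply: ler_wpM2l => //.
have p : 0 <= C0 * c by apply: le_trans hbc.
by rewrite -(ger0_norm c0) -normrM ger0_norm.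
Qed.

Arguments chain {R a b c C1 C0}.

Lemma sum_bnd (R : numFieldType) (V : lmodType R) (q : V -> R) (x y : V) (A B t : R) :
  quasi_norm q -> q x <= A * t -> q y <= B * t ->
  exists k : R, 0 <= k /\ q (x + y) <= k * (A + B) * t.
Proof.
move=> [_ _ _ [k [k1 hk]]] hx hy; exists k; split.
  by apply: le_trans k1; exact: ler01.
apply: le_trans (hk x y) _; rewrite -mulrA mulrDl; apply: ler_wpM2l.
  by apply: le_trans k1; exact: ler01.
exact: lerD.
Qed.

Theorem theorem6p3
  (R : numFieldType)
  (XU XV D N WU WV : lmodType R)
  (qXU : XU -> R) (qXV : XV -> R) (qD : D -> R) (qN : N -> R)
  (hXU : quasi_banach qXU) (hXV : quasi_banach qXV)
  (hD : quasi_banach qD) (hN : quasi_banach qN)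
  (* u |-> (L u)|_U and u |-> (L u)|_V, linear; K^O is their kernel *)
  (LU : {linear XU -> WU}) (LV : {linear XV -> WV})
  (* traces and conormal derivatives, linear on K^O *)
  (TrU : XU -> D) (TrV : XV -> D) (MU : XU -> N) (MV : XV -> N)
  (hTrU : linear_on (fun u => LU u = 0) TrU)
  (hTrV : linear_on (fun u => LV u = 0) TrV)
  (hMU : linear_on (fun u => LU u = 0) MU)
  (hMV : linear_on (fun u => LV u = 0) MV)
  (* double and single layer potentials *)
  (DU : {linear D -> XU}) (DV : {linear D -> XV})
  (SU : {linear N -> XU}) (SV : {linear N -> XV}) :
  (* part (a) *)
  ((* (MM) *)
   bounded_on (fun u => LU u = 0) qXU qN MU ->
   bounded_on (fun u => LV u = 0) qXV qN MV ->
   (* (SS) *)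
   bounded_on (fun _ => True) qN qXU SU -> (forall g, LU (SU g) = 0) ->
   bounded_on (fun _ => True) qN qXV SV -> (forall g, LV (SV g) = 0) ->
   (* (JS-cts) *)
   (forall g, TrU (SU g) - TrV (SV g) = 0) ->
   (* (JS-jump) *)
   (forall g, MU (SU g) + MV (SV g) = g) ->
   (* uniqueness for the Dirichlet problems *)
   (forall f u1 u2, LU u1 = 0 -> LU u2 = 0 -> TrU u1 = f -> TrU u2 = f -> u1 = u2) ->
   (forall f u1 u2, LV u1 = 0 -> LV u2 = 0 -> TrV u1 = f -> TrV u2 = f -> u1 = u2) ->
   injective (fun g => TrU (SU g)) /\
   ((exists C0 : R,
       (forall u, LU u = 0 -> qXU u <= C0 * qD (TrU u)) /\
       (forall u, LV u = 0 -> qXV u <= C0 * qD (TrV u))) ->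
    exists C1 : R, forall g, qN g <= C1 * qD (TrU (SU g))))
  /\
  (* part (b) *)
  ((* (TT) *)
   bounded_on (fun u => LU u = 0) qXU qD TrU ->
   bounded_on (fun u => LV u = 0) qXV qD TrV ->
   (* (DD) *)
   bounded_on (fun _ => True) qD qXU DU -> (forall f, LU (DU f) = 0) ->
   bounded_on (fun _ => True) qD qXV DV -> (forall f, LV (DV f) = 0) ->
   (* (JD-cts) *)
   (forall f, MU (DU f) - MV (DV f) = 0) ->
   (* (JD-jump) *)
   (forall f, TrU (DU f) + TrV (DV f) = - f) ->
   (* uniqueness for the Neumann problems *)
   (forall g u1 u2, LU u1 = 0 -> LU u2 = 0 -> MU u1 = g -> MU u2 = g -> u1 = u2) ->
   (forall g u1 u2, LV u1 = 0 -> LV u2 = 0 -> MV u1 = g -> MV u2 = g -> u1 = u2) ->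
   injective (fun f => MU (DU f)) /\
   ((exists C0 : R,
       (forall u, LU u = 0 -> qXU u <= C0 * qN (MU u)) /\
       (forall u, LV u = 0 -> qXV u <= C0 * qN (MV u))) ->
    exists C1 : R, forall f, qD f <= C1 * qN (MU (DU f)))).
Proof.
have q0 : forall (V : lmodType R) (q : V -> R), quasi_banach q -> forall x, 0 <= q x.
  by move=> V q [[]].
split.
- move=> bMU bMV bSU LSU bSV LSV Jc Jj uU uV.
  have TV : forall g, TrV (SV g) = TrU (SU g).
    by move=> g; apply/esym/eqP; rewrite -subr_eq0; apply/eqP.
  split.
    move=> g1 g2 /= E.
    have E1 : SU g1 = SU g2 by apply: (uU (TrU (SU g2))).
    have E2 : SV g1 = SV g2 by apply: (uV (TrU (SU g2))); rewrite ?TV.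
    by rewrite -(Jj g1) -(Jj g2) E1 E2.
  move=> [C0 [H1 H2]].
  have [CM [CM0 hM]] := bnd_abs (q0 _ _ hXU) (q0 _ _ hN) bMU.
  have [CV [CV0 hV]] := bnd_abs (q0 _ _ hXV) (q0 _ _ hN) bMV.
  have [[_ _ _ [k0 [k1 hk]]] _] := hN.
  have k00 : 0 <= k0 by apply: le_trans k1; exact: ler01.
  exists (k0 * (CM * `|C0| + CV * `|C0|)) => g.
  rewrite -{1}(Jj g); apply: le_trans (hk _ _) _.
  rewrite -mulrA; apply: ler_wpM2l => //; rewrite mulrDl; apply: lerD.
    exact: (chain (q0 _ _ hXU _) (q0 _ _ hD _) CM0 (hM _ (LSU g)) (H1 _ (LSU g))).
  rewrite -TV; exact: (chain (q0 _ _ hXV _) (q0 _ _ hD _) CV0 (hV _ (LSV g)) (H2 _ (LSV g))).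
- move=> bTU bTV bDU LDU bDV LDV Jc Jj uU uV.
  have MV' : forall f, MV (DV f) = MU (DU f).
    by move=> f; apply/esym/eqP; rewrite -subr_eq0; apply/eqP.
  have Jj' : forall f, f = - (TrU (DU f) + TrV (DV f)) by move=> f; rewrite Jj opprK.
  split.
    move=> f1 f2 /= E.
    have E1 : DU f1 = DU f2 by apply: (uU (MU (DU f2))).
    have E2 : DV f1 = DV f2 by apply: (uV (MU (DU f2))); rewrite ?MV'.
    by rewrite (Jj' f1) (Jj' f2) E1 E2.
  move=> [C0 [H1 H2]].
  have [CM [CM0 hM]] := bnd_abs (q0 _ _ hXU) (q0 _ _ hD) bTU.
  have [CV [CV0 hV]] := bnd_abs (q0 _ _ hXV) (q0 _ _ hD) bTV.
  have [[_ _ hs [k0 [k1 hk]]] _] := hD.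
  have k00 : 0 <= k0 by apply: le_trans k1; exact: ler01.
  exists (k0 * (CM * `|C0| + CV * `|C0|)) => f.
  rewrite {1}(Jj' f) -scaleN1r hs normrN normr1 mul1r.
  apply: le_trans (hk _ _) _.
  rewrite -mulrA; apply: ler_wpM2l => //; rewrite mulrDl; apply: lerD.
    exact: (chain (q0 _ _ hXU _) (q0 _ _ hN _) CM0 (hM _ (LDU f)) (H1 _ (LDU f))).
  rewrite -MV'; exact: (chain (q0 _ _ hXV _) (q0 _ _ hN _) CV0 (hV _ (LDV f)) (H2 _ (LDV f))).
Qed.
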